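(* Let $\mathcal{Z}\subset\mathbb{R}^d$ be an integral, unit-generated lattice, and let $K$ be its Dirichlet region. Then $\partial K$ is contained in the union of the hyperplanes $\{x: x\cdot z=1/2\}$, where $z$ ranges over the elements of $\mathcal{Z}$ of norm $1$.
   Context: A lattice is a discrete additive subgroup of $\mathbb{R}^d$ with compact quotient. Integral: $z\cdot z\in\mathbb{Z}$ for all $z\in\mathcal{Z}$. Unit-generated: every element of $\mathcal{Z}$ is a sum of elements of $\mathcal{Z}$ of Euclidean norm $1$. Dirichlet region: $K=\{x:|x|\le|x-z|\ \forall z\in\mathcal{Z}\}$. *)

(* Defs.v *)
(* R : realType, vectors of R^d are row vectors 'rV[R]_d
   (with the product topology from mathcomp-analysis, i.e. the usual topology). *)
From HB Require Import structures.
From mathcomp Require Import all_boot all_order all_algebra.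
From mathcomp Require Import all_classical all_reals all_analysis.
Set Implicit Arguments. Unset Strict Implicit. Unset Printing Implicit Defensive.
Import Order.TTheory GRing.Theory Num.Theory.
Import numFieldNormedType.Exports.
Local Open Scope classical_set_scope.
Local Open Scope ring_scope.

Section Defs.
Variables (R : realType) (d : nat).

Definition dot (x y : 'rV[R]_d) : R := \sum_(i < d) x ord0 i * y ord0 i.
Definition enorm (x : 'rV[R]_d) : R := Num.sqrt (dot x x).

Definition additive_subgroup (Z : set 'rV[R]_d) : Prop :=
  Z 0 /\ (forall x y, Z x -> Z y -> Z (x - y)).
Definition discrete_set (Z : set 'rV[R]_d) : Prop :=
  forall z, Z z -> \forall y \near z, Z y -> y = z.
(* compact quotient R^d / Z : some compact set meets every coset of Z *)
Definition compact_quotient (Z : set 'rV[R]_d) : Prop :=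
  exists C : set 'rV[R]_d, compact C /\ (forall x, exists c z, C c /\ Z z /\ x = c + z).
Definition is_lattice (Z : set 'rV[R]_d) : Prop :=
  [/\ additive_subgroup Z, discrete_set Z & compact_quotient Z].

Definition integral_lattice (Z : set 'rV[R]_d) : Prop :=
  forall z, Z z -> exists n : int, dot z z = n%:~R.

Definition unit_generated (Z : set 'rV[R]_d) : Prop :=
  forall z, Z z -> exists s : seq 'rV[R]_d,
    (forall u, u \in s -> Z u /\ enorm u = 1) /\ z = \sum_(u <- s) u.

Definition dirichlet (Z : set 'rV[R]_d) : set 'rV[R]_d :=
  [set x | forall z, Z z -> enorm x <= enorm (x - z)].

Definition boundary (A : set 'rV[R]_d) : set 'rV[R]_d :=
  closure A `\` interior A.

End Defs.

(* Main.v *)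
Require Import Defs.
From HB Require Import structures.
From mathcomp Require Import all_boot all_order all_algebra.
From mathcomp Require Import all_classical all_reals all_analysis.
From mathcomp Require Import ring lra zify.
Import Order.TTheory GRing.Theory Num.Theory.
Import numFieldNormedType.Exports.
Local Open Scope classical_set_scope.
Local Open Scope ring_scope.

Section Alg.
Variables (R : realType) (d : nat).
Implicit Types x y z u v w : 'rV[R]_d.

Lemma dotC x y : dot x y = dot y x.
Proof. by apply: eq_bigr => i _; rewrite mulrC. Qed.

Lemma dotDl x y z : dot (x + y) z = dot x z + dot y z.
Proof. by rewrite /dot -big_split; apply: eq_bigr => i _; rewrite mxE mulrDl. Qed.

Lemma dotNl x z : dot (- x) z = - dot x z.
Proof. by rewrite /dot -sumrN; apply: eq_bigr => i _; rewrite mxE mulNr. Qed.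

Lemma dotBl x y z : dot (x - y) z = dot x z - dot y z.
Proof. by rewrite dotDl dotNl. Qed.

Lemma dotDr x y z : dot z (x + y) = dot z x + dot z y.
Proof. by rewrite dotC dotDl !(dotC z). Qed.

Lemma dotBr x y z : dot z (x - y) = dot z x - dot z y.
Proof. by rewrite dotC dotBl !(dotC z). Qed.

Lemma dot0l z : dot 0 z = 0.
Proof. by rewrite /dot big1 // => i _; rewrite mxE mul0r. Qed.

Lemma dot_sumr x (s : seq 'rV[R]_d) : dot x (\sum_(u <- s) u) = \sum_(u <- s) dot x u.
Proof.
elim: s => [|a s IH]; first by rewrite !big_nil dotC dot0l.
by rewrite !big_cons dotDr IH.
Qed.

Lemma dot_ge0 x : 0 <= dot x x.
Proof. by apply: sumr_ge0 => i _; rewrite -expr2 sqr_ge0. Qed.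

Lemma dot_eq0 x : dot x x = 0 -> x = 0.
Proof.
move=> /eqP; rewrite psumr_eq0; last by move=> i _; rewrite -expr2 sqr_ge0.
move=> /allP H; apply/rowP => i; rewrite mxE.
by have /(_ (mem_index_enum i))/implyP/(_ isT) := H i; rewrite mulf_eq0 orbb => /eqP.
Qed.

Lemma enorm1 u : enorm u = 1 -> dot u u = 1.
Proof. by move=> h; rewrite -(sqr_sqrtr (dot_ge0 u)) -/(enorm u) h expr1n. Qed.

Lemma enorm1' u : dot u u = 1 -> enorm u = 1.
Proof. by rewrite /enorm => ->; rewrite sqrtr1. Qed.


Lemma dot_sqr u v : dot (u + v) (u + v) = dot u u + 2 * dot u v + dot v v.
Proof. rewrite !dotDl !dotDr (dotC v u); ring. Qed.

Variable Z : set 'rV[R]_d.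
Hypotheses (hsub : additive_subgroup Z) (hint : integral_lattice Z).

Lemma ZD {u v} : Z u -> Z v -> Z (u + v).
Proof.
case: hsub => Z0 ZB zu zv.
have := ZB u (0 - v) zu (ZB _ _ Z0 zv); by rewrite sub0r opprK.
Qed.

Definition unitZ u := Z u /\ dot u u = 1.

Lemma pair_cases {u v} : unitZ u -> unitZ v -> dot u v < 0 ->
  u + v = 0 \/ unitZ (u + v).
Proof.
move=> [zu uu] [zv vv] neg.
have zuv := ZD zu zv.
have [n hn] := hint _ zuv.
rewrite dot_sqr uu vv in hn.
have n0 : (0 <= n)%R.
  by rewrite -(ler0z R) -hn; have := dot_ge0 (u + v); rewrite dot_sqr uu vv.
have n2 : (n < 2)%R.
  by rewrite -(ltr_int R) -hn; lra.
have : n = 0 \/ n = 1 by lia.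
case=> e; rewrite e in hn; [left | right].
  by apply: dot_eq0; rewrite dot_sqr uu vv hn.
by split=> //; rewrite dot_sqr uu vv hn.
Qed.

Definition units_in (s : seq 'rV[R]_d) := forall u, u \in s -> unitZ u.
Definition nn u v := 0 <= dot u v.

Lemma reduce s : units_in s -> ~~ pairwise nn s ->
  exists s', [/\ (size s' < size s)%N, units_in s' &
     \sum_(u <- s') u = \sum_(u <- s) u].
Proof.
elim: s => [|a t IH] //= hu.
have ua : unitZ a by apply: hu; rewrite inE eqxx.
have ut : units_in t by move=> u ut; apply: hu; rewrite inE ut orbT.
rewrite negb_and => /orP[/allPn [v vt] | ].
  rewrite /nn -ltNge => neg.
  have uv := ut _ vt.
  have ut' : units_in (rem v t) by move=> w /mem_rem; exact: ut.
  have eqs : \sum_(u <- t) u = v + \sum_(u <- rem v t) u.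
    by rewrite (perm_big _ (perm_to_rem vt)) big_cons.
  case: (pair_cases ua uv neg) => [e | uav].
    exists (rem v t); split.
    - by rewrite size_rem // (leq_ltn_trans (leq_pred _)).
    - exact: ut'.
    - by rewrite big_cons eqs addrA e add0r.
  exists ((a + v) :: rem v t); split.
  - by rewrite /= size_rem // prednK // lt0n size_eq0; apply/eqP => t0; rewrite t0 in vt.
  - by move=> w; rewrite inE => /orP[/eqP -> | /ut'].
  - by rewrite !big_cons eqs addrA.
move=> /(IH ut) [t' [st' ut' et']].
exists (a :: t'); split => //.
- by move=> w; rewrite inE => /orP[/eqP -> | /ut'].
- by rewrite !big_cons et'.
Qed.

Lemma direct s : units_in s -> pairwise nn s ->
  (size s)%:R <= dot (\sum_(u <- s) u) (\sum_(u <- s) u).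
Proof.
elim: s => [|a t IH] hu /=; first by rewrite big_nil dot0l.
move=> /andP[ha ht].
have [_ ua] : unitZ a by apply: hu; rewrite inE eqxx.
have ut : units_in t by move=> u ut; apply: hu; rewrite inE ut orbT.
rewrite big_cons dot_sqr ua dot_sumr.
have := IH ut ht.
have : 0 <= \sum_(u <- t) dot a u.
  by rewrite big_seq; apply: sumr_ge0 => u ut'; apply: (allP ha).
rewrite -[(size t).+1]addn1 natrD; lra.
Qed.

Lemma key y z : Z z -> unit_generated Z ->
  (forall u, unitZ u -> 2 * dot y u <= 1) -> 2 * dot y z <= dot z z.
Proof.
move=> zz ug hy.
have [s [hs ->]] := ug z zz.
have us : units_in s by move=> u /hs [zu /enorm1 uu].
clear hs.
move: {2}(size s) (leqnn (size s)) => n.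
elim: n s us => [|n IH] s us hn.
  by move: hn; rewrite leqn0 size_eq0 => /eqP ->; rewrite big_nil dotC !dot0l mulr0.
have [pw | npw] := boolP (pairwise nn s).
  have hd := direct _ us pw.
  apply: le_trans hd.
  rewrite dot_sumr mulr_sumr.
  have -> : (size s)%:R = \sum_(u <- s) (1 : R).
    by elim: (s) => [|a t IHt]; rewrite ?big_nil // big_cons -IHt /= -addn1 natrD addrC.
  rewrite big_seq [X in _ <= X]big_seq; apply: ler_sum => u su; exact: hy (us _ su).
have [s' [ss' us' <-]] := reduce _ us npw.
apply: IH => //; rewrite -ltnS; exact: leq_trans ss' hn.
Qed.
Lemma coord_le (w : 'rV[R]_d) i : `|w ord0 i| <= `|w|.
Proof.
have /mapP[j Hj ->] : `|w ord0 i| \in [seq `|w x.1 x.2| | x : 'I_1 * 'I_d].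
  by apply/mapP; exists (ord0, i) => //=; rewrite mem_enum.
by rewrite [leRHS]/Num.Def.normr /= mx_normrE; apply/bigmax_geP; right => /=; exists j.
Qed.

Lemma dot_bound (a b : 'rV[R]_d) : `|dot a b| <= d%:R * (`|a| * `|b|).
Proof.
apply: le_trans (ler_norm_sum _ _ _) _.
have -> : d%:R * (`|a| * `|b|) = \sum_(i < d) (`|a| * `|b|).
  by rewrite sumr_const card_ord mulr_natl.
apply: ler_sum => i _; rewrite normrM.
by apply: ler_pM => //; apply: coord_le.
Qed.

Lemma unit_norm u : dot u u = 1 -> `|u| <= 1.
Proof.
move=> uu; rewrite [X in X <= _]/Num.Def.normr /= mx_normrE.
apply: bigmax_le => // -[i j] _ /=.
rewrite (ord1 i).
have : u ord0 j * u ord0 j <= 1.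
  rewrite -uu /dot (bigD1 j) //= lerDl.
  by apply: sumr_ge0 => k _; rewrite -expr2 sqr_ge0.
move=> h; rewrite ler_norml; apply/andP; split; nra.
Qed.

Lemma dirichlet_unit y u : dirichlet Z y -> unitZ u -> 2 * dot y u <= 1.
Proof.
move=> /(_ u) + [zu uu] => /(_ zu).
rewrite /enorm ler_sqrt; last exact: dot_ge0.
rewrite !dotBl !dotBr uu (dotC u y); lra.
Qed.

Lemma small (e : R) : 0 < e -> exists r, 0 < r /\ 2 * d%:R * r <= e.
Proof.
move=> e0; have k0 : 0 < 2 * d%:R + 1 :> R by rewrite ltr_wpDl // mulr_ge0.
exists (e / (2 * d%:R + 1)); split; first by rewrite divr_gt0.
rewrite mulrA ler_pdivrMr //.
have : 0 <= d%:R :> R by [].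
nra.
Qed.

Lemma dot_continuous x : continuous (dot x).
Proof.
move=> v B /nbhs_ballP [e e0 hB].
have k0 : 0 < d%:R * `|x| + 1 :> R by rewrite ltr_wpDl // mulr_ge0.
apply/nbhs_ballP; exists (e / (d%:R * `|x| + 1)); first by rewrite /= divr_gt0.
move=> w; rewrite -ball_normE /= ltr_pdivlMr // => h.
apply: hB; rewrite -ball_normE /=.
rewrite -dotBr; apply: le_lt_trans (dot_bound _ _) _.
apply: le_lt_trans h.
have : 0 <= `|v - w| by [].
have : 0 <= d%:R * `|x| by rewrite mulr_ge0.
nra.
Qed.

Lemma sep u v : unitZ u -> unitZ v -> `|u - v| < (d%:R + 1)^-1 -> u = v.
Proof.
move=> [zu _] [zv _] h.
have zw : Z (u - v) by case: hsub => _ ZB; exact: ZB.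
have [n hn] := hint _ zw.
have k0 : 0 < d%:R + 1 :> R by rewrite ltr_wpDl.
set r := (d%:R + 1)^-1 in h.
have r1 : r * (d%:R + 1) = 1 by rewrite mulVf // gt_eqF.
have r0 : 0 < r by rewrite invr_gt0.
have := dot_bound (u - v) (u - v).
have n0 : 0 <= `|u - v| by [].
have d0 : 0 <= d%:R :> R by [].
have hlt : d%:R * (`|u - v| * `|u - v|) < 1.
  have : d%:R * (`|u - v| * `|u - v|) <= d%:R * (r * r).
    by apply: ler_wpM2l => //; apply: ler_pM => //; apply: ltW.
  move=> h2; apply: le_lt_trans h2 _; nra.
move=> hb.
have : dot (u - v) (u - v) < 1 by apply: le_lt_trans hlt; apply: le_trans (ler_norm _) hb.
have := dot_ge0 (u - v).
rewrite hn ler0z => n0' n1.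
have n1' : (n < 1)%R by rewrite -(ltr_int R).
have : n = 0 by lia.
move=> e; rewrite e in hn.
by apply/eqP; rewrite -subr_eq0; apply/eqP; apply: dot_eq0.
Qed.

Lemma units_closed : closed unitZ.
Proof.
move=> y yc.
have k0 : 0 < d%:R + 1 :> R by rewrite ltr_wpDl.
pose r : R := (d%:R + 1)^-1.
have r0 : 0 < r by rewrite invr_gt0.
have r20 : 0 < r / 2 by rewrite divr_gt0.
have [u [uu yu]] := yc _ (nbhsx_ballx y (r / 2) r20).
move: yu; rewrite -ball_normE /= => yu.
have [->//|neq] := eqVneq y u.
have p0 : 0 < `|y - u| by rewrite normr_gt0 subr_eq0.
have s0 : 0 < Num.min (r / 2) `|y - u| by rewrite lt_min r20 p0.
have [v [vv yv]] := yc _ (nbhsx_ballx y _ s0).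
move: yv; rewrite -ball_normE /= lt_min => /andP[yv1 yv2].
have uv : `|u - v| < r.
  have -> : u - v = - (y - u) + (y - v) by rewrite opprB addrA subrK.
  apply: le_lt_trans (ler_normD _ _) _; rewrite normrN.
  have -> : r = r / 2 + r / 2 by rewrite -splitr.
  by rewrite ltrD.
have := sep _ _ uu vv uv => e; rewrite -e in yv2.
by rewrite ltxx in yv2.
Qed.

Lemma units_compact : compact unitZ.
Proof.
apply: (subclosed_compact units_closed).
  apply: (@rV_compact R d (fun=> `[-1 : R, 1]%classic)).
  by move=> _; apply: segment_compact.
move=> u [_ uu] i /=; rewrite in_itv /=.
have := unit_norm _ uu; have := coord_le u i.
rewrite -ler_norml; exact: le_trans.
Qed.

Lemma main_sec x : unit_generated Z -> boundary (dirichlet Z) x ->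
  exists c, unitZ c /\ dot x c = 1 / 2.
Proof.
move=> ug [xc xni].
have step1 : forall u, unitZ u -> 2 * dot x u <= 1.
  move=> u hu; apply/ler_addgt0Pr => e e0.
  have [r [r0 hr]] := small _ e0.
  have [y [Ky xy]] := xc _ (nbhsx_ballx x r r0).
  move: xy; rewrite -ball_normE /= => xy.
  have h1 := dirichlet_unit _ _ Ky hu.
  have hb := dot_bound (x - y) u; rewrite dotBl in hb.
  have hn := unit_norm _ hu.2.
  have h2 : dot x u - dot y u <= d%:R * r.
    apply: le_trans (ler_norm _) (le_trans hb _).
    apply: ler_wpM2l => //; rewrite -[r]mulr1; apply: ler_pM => //; exact: ltW.
  have d0 : 0 <= d%:R :> R by [].
  lra.
have step3 : forall e, 0 < e -> exists u, unitZ u /\ 1 - e < 2 * dot x u.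
  move=> e e0; have [r [r0 hr]] := small _ e0.
  have : ~ (forall y, ball x r y -> dirichlet Z y).
    by move=> h; apply: xni; apply/nbhs_ballP; exists r.
  move=> /existsNP [y /not_implyP [xy nK]].
  move: xy; rewrite -ball_normE /= => xy.
  have : ~ (forall u, unitZ u -> 2 * dot y u <= 1).
    move=> hy; apply: nK => z zz.
    rewrite /enorm ler_sqrt ?dot_ge0 //.
    have := key _ _ zz ug hy; rewrite !dotBl !dotBr (dotC z y); lra.
  move=> /existsNP [u /not_implyP [hu /negP]]; rewrite -ltNge => hlt.
  exists u; split => //.
  have hb := dot_bound (y - x) u; rewrite dotBl in hb.
  have hn := unit_norm _ hu.2.
  have h2 : dot y u - dot x u <= d%:R * r.
    apply: le_trans (ler_norm _) (le_trans hb _).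
    apply: ler_wpM2l => //; rewrite -[r]mulr1; apply: ler_pM => //.
    by rewrite distrC; exact: ltW.
  have d0 : 0 <= d%:R :> R by [].
  lra.
have ne : unitZ !=set0 by have [u0 [hu0 _]] := step3 1 ltr01; exists u0.
have [c cU cmax] := compact_EVT_max ne units_compact
   (continuous_subspaceT (dot_continuous x)).
rewrite in_setE in cU; exists c; split => //.
have : 1 <= 2 * dot x c.
  apply/ler_addgt0Pr => e e0; have [u [hu hlt]] := step3 e e0.
  have := cmax u; rewrite in_setE => /(_ hu); lra.
have := step1 c cU; lra.
Qed.

End Alg.

Theorem lemma4p7 (R : realType) (d : nat) (Z : set 'rV[R]_d) :
  is_lattice Z -> integral_lattice Z -> unit_generated Z ->
  boundary (dirichlet Z) `<=`
    \bigcup_(z in [set z | Z z /\ enorm z = 1]) [set x | dot x z = 1 / 2].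
Proof.
move=> [hsub _ _] hint ug x hx.
have [c [[zc cc] hc]] := @main_sec R d Z hsub hint x ug hx.
by exists c => //; split => //; apply: enorm1'.
Qed.
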